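(* In every strategic game (in the setting described in the context, with equivalent priors) with imperfect information, Assumption BAY is violated.
   Context: Setting: there are $n\ge 2$ players and a measurable space $(\Omega,\mathcal{F})$. Each player $i$ has a prior $p_i$ on $\mathcal{F}$, an action set $A_i\subseteq\mathbb{R}$ with $|A_i|>1$, and a finite private information partition $\mathcal{I}_i$ of $\Omega$ into nonempty measurable events; the coarsest common refinement of the $\mathcal{I}_i$ is measurable. The priors are equivalent: $p_i(F)=0$ iff $p_j(F)=0$ for all $F\in\mathcal{F}$, $i,j$. Events of positive probability are called substantial, those of probability zero null. A strategy of player $i$ is a $\sigma(\mathcal{I}_i)$-measurable function $s_i:\Omega\to A_i$, and each player may choose any such function. Let $s^i$ be the tuple of the actual strategies of the other players. For each substantial $I_i\in\mathcal{I}_i$ and action $a_i\in A_i$ chosen on $I_i$, player $i$ has a conjecture $\psi_i(I_i,a_i)$ about the other players' strategies, unique up to $p_i(\cdot\mid I_i)$-null events. Player $i$ has imperfect information if there exist a substantial $I_i\in\mathcal{I}_i$, a player $j\neq i$ and $I_j\in\mathcal{I}_j$ with $0<p_i(I_j\mid I_i)<1$; the game has imperfect information if some player does. Assumption BAY: for every player $i$, each substantial $I_i\in\mathcal{I}_i$ and each $a_i\in A_i$, $\psi_i(I_i,a_i)=s^i$ except on $p_i(\cdot\mid I_i)$-null events, where $s^i$ is the true response of the others; i.e., each player's action on a substantial information cell uniquely and correctly determines the other players' strategies up to null events. *)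

(* Defs.v *)
From HB Require Import structures.
From mathcomp Require Import all_boot all_order all_algebra.
From mathcomp Require Import all_classical all_reals.
From mathcomp Require Import ereal measure probability.
Set Implicit Arguments. Unset Strict Implicit. Unset Printing Implicit Defensive.
Import Order.TTheory GRing.Theory Num.Theory.
Local Open Scope classical_set_scope.
Local Open Scope ring_scope.

Section Game.
Context {R : realType} {d : measure_display} {T : measurableType d} {n : nat}.

(* Conditional probability p(F | B) (as a real number); only used for
   substantial B, i.e. p B > 0. *)
Definition cond_prob (p : probability T R) (B F : set T) : R :=
  fine (p (F `&` B)) / fine (p B).

Definition finite_partition (P : set (set T)) : Prop :=
  [/\ finite_set P,
      (forall C, P C -> measurable C /\ C !=set0),
      (forall C D, P C -> P D -> C `&` D !=set0 -> C = D) &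
      (forall w, exists C, P C /\ C w)].

Definition equivalent_priors (p : 'I_n -> probability T R) : Prop :=
  forall (F : set T) (i j : 'I_n), measurable F -> (p i F = 0%E <-> p j F = 0%E).

Definition substantial (p : probability T R) (B : set T) : Prop := (0 < p B)%E.

(* A strategy: a sigma(P)-measurable function into the action set A; since P is
   a finite partition this means: A-valued and constant on every cell of P. *)
Definition is_strategy (P : set (set T)) (A : set R) (s : T -> R) : Prop :=
  (forall w, A (s w)) /\ (forall C, P C -> forall x y, C x -> C y -> s x = s y).

Definition player_imperfect_info (p : 'I_n -> probability T R)
    (P : 'I_n -> set (set T)) (i : 'I_n) : Prop :=
  exists Ii, P i Ii /\ substantial (p i) Ii /\
  exists j : 'I_n, j != i /\ exists Ij, P j Ij /\
    0 < cond_prob (p i) Ii Ij /\ cond_prob (p i) Ii Ij < 1.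

Definition imperfect_info (p : 'I_n -> probability T R)
    (P : 'I_n -> set (set T)) : Prop :=
  exists i, player_imperfect_info p P i.

Definition ae_eq_cond (p : probability T R) (B : set T) (f g : T -> R) : Prop :=
  exists N, measurable N /\ cond_prob p B N = 0 /\
    (forall w, B w -> ~ N w -> f w = g w).

(* Conjectures: psi i Ii ai is a tuple (indexed by the players j <> i) of
   strategies of the other players. *)
Definition conjectures_are_strategies (P : 'I_n -> set (set T)) (A : 'I_n -> set R)
    (psi : 'I_n -> set T -> R -> 'I_n -> T -> R) : Prop :=
  forall i Ii ai j, P i Ii -> A i ai -> j != i -> is_strategy (P j) (A j) (psi i Ii ai j).

Definition profiles_are_strategies (P : 'I_n -> set (set T)) (A : 'I_n -> set R)
    (S : set ('I_n -> T -> R)) : Prop :=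
  forall s, S s -> forall j, is_strategy (P j) (A j) (s j).

Definition free_choice (P : 'I_n -> set (set T)) (A : 'I_n -> set R)
    (S : set ('I_n -> T -> R)) : Prop :=
  forall i si, is_strategy (P i) (A i) si -> exists s, S s /\ s i = si.

Definition BAY (p : 'I_n -> probability T R) (P : 'I_n -> set (set T))
    (A : 'I_n -> set R) (psi : 'I_n -> set T -> R -> 'I_n -> T -> R)
    (S : set ('I_n -> T -> R)) : Prop :=
  forall s, S s -> forall i Ii, P i Ii -> substantial (p i) Ii ->
  forall ai, A i ai -> (forall w, Ii w -> s i w = ai) ->
  forall j, j != i -> ae_eq_cond (p i) Ii (psi i Ii ai j) (s j).

End Game.

(* Main.v *)
Require Import Defs.
From HB Require Import structures.
From mathcomp Require Import all_boot all_order all_algebra.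
From mathcomp Require Import all_classical all_reals.
From mathcomp Require Import ereal measure probability.
Local Open Scope classical_set_scope.
Local Open Scope ring_scope.
Import Order.TTheory GRing.Theory Num.Theory.

Section Helpers.
Context {R : realType} {d : measure_display} {T : measurableType d}.

Lemma pfin (p : probability T R) {X} : measurable X -> p X = (fine (p X))%:E.
Proof.
move=> mX; rewrite fineK // ge0_fin_numE ?measure_ge0 //.
by rewrite (le_lt_trans (probability_le1 p mX)) // ltry.
Qed.

Lemma fine_pos {p : probability T R} {X} : measurable X -> (0 < p X)%E -> 0 < fine (p X).
Proof. by move=> mX; rewrite (pfin p mX) lte_fin. Qed.

Lemma cond0 {p : probability T R} {B N} : measurable B -> measurable N ->
  (0 < p B)%E -> cond_prob p B N = 0 -> p (N `&` B) = 0%E.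
Proof.
move=> mB mN pB; rewrite /cond_prob => /eqP; rewrite mulf_eq0 invr_eq0.
have := fine_pos mB pB; rewrite lt0r => /andP[/negbTE -> _]; rewrite orbF => /eqP z.
by rewrite (pfin p (measurableI _ _ mN mB)) z.
Qed.

Lemma ae_contra {p : probability T R} {B} {f g h : T -> R} {E} :
  measurable B -> (0 < p B)%E -> measurable E -> (0 < p (E `&` B))%E ->
  (forall w, E w -> B w -> g w <> h w) ->
  ae_eq_cond p B f g -> ae_eq_cond p B f h -> False.
Proof.
move=> mB pB mE pEB gh [N1 [mN1 [c1 e1]]] [N2 [mN2 [c2 e2]]].
have z1 := cond0 mB mN1 pB c1; have z2 := cond0 mB mN2 pB c2.
have sub : E `&` B `<=` (N1 `&` B) `|` (N2 `&` B).
  move=> w [Ew Bw]; case: (pselect (N1 w)) => [?|n1]; first by left.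
  case: (pselect (N2 w)) => [?|n2]; first by right.
  by exfalso; apply: (gh w Ew Bw); rewrite -e1 // -e2.
have : (p (E `&` B) <= 0)%E.
  apply: le_trans (le_measure _ _ _ sub) _; rewrite ?inE.
  - exact: measurableI.
  - by apply: measurableU; apply: measurableI.
  - apply: le_trans (measureU2 _ _ _) _; [exact: measurableI|exact: measurableI|].
    have e0 : forall x y : \bar R, x = 0%E -> y = 0%E -> (x + y <= 0)%E by move=> x y -> ->; rewrite adde0.
    exact: e0 z1 z2.
by rewrite leNgt pEB.
Qed.

Lemma cell_ex {Q : set (set T)} {p : probability T R} {B Ij} :
  finite_partition Q -> measurable B -> Q Ij -> (p (Ij `&` B) < p B)%E ->
  exists C, [/\ Q C, C <> Ij & (0 < p (C `&` B))%E].
Proof.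
move=> [fQ mQ dQ cQ] mB QIj lt; apply: contrapT => Hn.
have H0 : forall C, Q C -> C <> Ij -> p (C `&` B) = 0%E.
  move=> C QC CI; apply/eqP; rewrite eq_le measure_ge0 andbT leNgt; apply/negP => pos.
  by apply: Hn; exists C.
have [X QX] := finite_fsetP.1 fQ.
have negl : (p.-negligible (\big[setU/set0]_(C <- finmap.enum_fset X) (C `&` B `\` Ij))).
  rewrite big_seq; elim/big_ind: _.
  - exact: negligible_set0.
  - by move=> ? ? ? ?; apply: negligibleU.
  move=> C CX; have QC : Q C by rewrite QX.
  case: (pselect (C = Ij)) => [->|CI].
    by exists set0; split => // w [[]].
  exists (C `&` B); split; first by apply: measurableI => //; exact: (mQ C QC).1.
    exact: H0.
  by move=> w [].
have sub : B `\` Ij `<=` \big[setU/set0]_(C <- finmap.enum_fset X) (C `&` B `\` Ij).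
  rewrite -bigcup_fset => w [Bw nIj]; have [C [QC Cw]] := cQ w.
  by exists C; [rewrite -QX|].
have [N [mN N0 sN]] := negl.
have z : p (B `\` Ij) = 0%E.
  apply: (subset_measure0 _ mN) => //; first by apply: measurableD => //; exact: (mQ Ij QIj).1.
  exact: subset_trans sub sN.
have e0 : forall x y z w : \bar R, w = (x + z)%E -> x = 0%E -> (y < w)%E -> y = z -> False.
  by move=> x y z0 w -> -> lt0 yz; move: lt0; rewrite yz add0e ltxx.
have e1 := measureDI p mB (mQ Ij QIj).1.
exact: (e0 _ _ _ _ e1 z lt (congr1 p (setIC _ _))).
Qed.

End Helpers.

Theorem theorem2 (R : realType) (d : measure_display) (T : measurableType d)
  (n : nat) (hn : (2 <= n)%N)
  (p : 'I_n -> probability T R) (A : 'I_n -> set R) (P : 'I_n -> set (set T))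
  (psi : 'I_n -> set T -> R -> 'I_n -> T -> R) (S : set ('I_n -> T -> R)) :
  (forall i, exists x y, A i x /\ A i y /\ x <> y) ->
  (forall i, finite_partition (P i)) ->
  equivalent_priors p ->
  imperfect_info p P ->
  conjectures_are_strategies P A psi ->
  profiles_are_strategies P A S ->
  free_choice P A S ->
  ~ BAY p P A psi S.
Proof.
move=> hA hP heq [i [Ii [PIi [subI [j [ji [Ij [PIj [c0 c1]]]]]]]]] hpsi hS hfree hBAY.
have [_ mPi _ _] := hP i; have [_ mPj dPj _] := hP j.
have mIi := (mPi Ii PIi).1; have mIj := (mPj Ij PIj).1.
have pos : (0 < p i (Ij `&` Ii))%E.
  rewrite lt0e measure_ge0 andbT; apply/eqP => z; move: c0.
  by rewrite /cond_prob z /= mul0r ltxx.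
have lt1 : (p i (Ij `&` Ii) < p i Ii)%E.
  rewrite lt_neqAle measureIr // andbT; apply/eqP => e; move: c1.
  by rewrite /cond_prob e divff ?ltxx // gt_eqF // fine_pos.
have [C [PC CIj posC]] := cell_ex (hP j) mIi PIj lt1.
have mC := (mPj C PC).1.
have [a [b [Aa [Ab ab]]]] := hA j.
pose t1 := fun _ : T => a.
pose t2 := fun w : T => if pselect (Ij w) then b else a.
have st1 : is_strategy (P j) (A j) t1 by split.
have st2 : is_strategy (P j) (A j) t2.
  split; first by move=> w; rewrite /t2; case: pselect.
  move=> D PD x y Dx Dy; rewrite /t2.
  case: pselect => Ix; case: pselect => Iy //.
  - by exfalso; apply: Iy; rewrite -(dPj D Ij PD PIj); [|exists x].
  - by exfalso; apply: Ix; rewrite -(dPj D Ij PD PIj); [|exists y].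
have [s1 [Ss1 s1j]] := hfree j t1 st1.
have [s2 [Ss2 s2j]] := hfree j t2 st2.
have [w0 Iw0] := (mPi Ii PIi).2.
have [As1 cs1] := hS s1 Ss1 i; have [As2 cs2] := hS s2 Ss2 i.
have k1 : forall w, Ii w -> s1 i w = s1 i w0 by move=> w Iw; exact: (cs1 Ii PIi).
have k2 : forall w, Ii w -> s2 i w = s2 i w0 by move=> w Iw; exact: (cs2 Ii PIi).
case: (pselect (s1 i w0 = s2 i w0)) => [e|ne].
- have h1 := hBAY s1 Ss1 i Ii PIi subI _ (As1 w0) k1 j ji.
  have h2 := hBAY s2 Ss2 i Ii PIi subI _ (As2 w0) k2 j ji.
  rewrite -e in h2.
  apply: (ae_contra mIi subI mIj pos _ h1 h2) => w Iw _.
  rewrite s1j s2j /t1 /t2; case: pselect => // _; exact: ab.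
- have posj : (0 < p j (Ii `&` C))%E.
    rewrite lt0e measure_ge0 andbT; apply/eqP => z.
    move: posC; rewrite setIC; have := (heq _ j i (measurableI _ _ mIi mC)).1 z.
    by move=> ->; rewrite ltxx.
  have subC : substantial (p j) C.
    by apply: lt_le_trans posj _; apply: measureIr.
  have ij : i != j by rewrite eq_sym.
  have h1 := hBAY s1 Ss1 j C PC subC a Aa (fun w _ => f_equal (fun f => f w) s1j) i ij.
  have k : forall w, C w -> s2 j w = a.
    move=> w Cw; rewrite s2j /t2; case: pselect => // Iw.
    by exfalso; apply: CIj; apply: (dPj C Ij PC PIj); exists w.
  have h2 := hBAY s2 Ss2 j C PC subC a Aa k i ij.
  apply: (ae_contra mC subC mIi posj _ h1 h2) => w Iw _.
  by rewrite k1 // k2.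
Qed.
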